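(* Let $T,Z$ be random variables on finite sets with joint distribution $P_{TZ}=P_U$ on $\mathcal U=\mathcal T\times\mathcal Z$, let $W(y|x)$ be a channel from a finite set $\mathcal X$ to a finite set $\mathcal Y$, and $Q$ a distribution on $\mathcal X$. Let \[ E=\min_{\hat P_U}\min_{\hat P_{XY}} D(\hat P_U\|P_U)+D(\hat P_{XY}\|QW)+\Big[\min_{\tilde P_U\in\mathcal K_s(\hat P_U)}\min_{\tilde P_{XY}\in\mathcal K_c(\hat P_{XY})} D(\tilde P_{XY}\|Q\hat P_Y)-H(\tilde P_{T|Z})\Big]^+, \] where $\mathcal K_s(\hat P_U)=\{\tilde P_U:\tilde P_Z=\hat P_Z,\ \mathbb E_{\tilde P}\log P_U(U)\ge \mathbb E_{\hat P}\log P_U(U)\}$ and $\mathcal K_c(\hat P_{XY})=\{\tilde P_{XY}:\tilde P_Y=\hat P_Y,\ \mathbb E_{\tilde P}\log W(Y|X)\ge\mathbb E_{\hat P}\log W(Y|X)\}$. Then \[ E\ge \min_{\hat P_U}\min_{\hat P_{XY}} D(\hat P_U\|P_U)+D(\hat P_{XY}\|QW)+\Big[D(\hat P_{XY}\|Q\hat P_Y)-H(\hat P_{T|Z})\Big]^+. \]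
   Context: Minimizations over $\hat P_U$, $\tilde P_U$ range over distributions on $\mathcal U$ and over $\hat P_{XY},\tilde P_{XY}$ over distributions on $\mathcal X\times\mathcal Y$. $[x]^+=\max\{0,x\}$; $QW$ denotes $Q(x)W(y|x)$; $Q\hat P_Y$ denotes $Q(x)\hat P_Y(y)$ with $\hat P_Y$ the $Y$-marginal of $\hat P_{XY}$; $\hat P_Z$ is the $Z$-marginal; $H(\tilde P_{T|Z})$ is the conditional entropy of $T$ given $Z$ under $\tilde P_U$. *)

(* Defs.v *)
From HB Require Import structures.
From mathcomp Require Import all_boot all_order all_algebra.
From mathcomp Require Import all_classical all_reals.
From mathcomp Require Import ereal exp.
Set Implicit Arguments. Unset Strict Implicit. Unset Printing Implicit Defensive.
Import Order.TTheory GRing.Theory Num.Theory.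
Local Open Scope classical_set_scope.
Local Open Scope ring_scope.

Section Defs.
Variable R : realType.

Definition isdist (A : finType) (p : A -> R) : Prop :=
  (forall a, 0 <= p a) /\ \sum_(a : A) p a = 1.

Definition elog (x : R) : \bar R := if 0 < x then (ln x)%:E else -oo%E.

(* relative entropy D(p||q) (natural log), convention 0 log 0 = 0, +oo if
   p is not absolutely continuous w.r.t. q *)
Definition relD (A : finType) (p q : A -> R) : \bar R :=
  (\sum_(a : A | (0 < p a)%R) (p a)%:E * ((ln (p a))%:E - elog (q a)))%E.

Definition Elog (A : finType) (p f : A -> R) : \bar R :=
  (\sum_(a : A | (0 < p a)%R) (p a)%:E * elog (f a))%E.

Definition margZ (T Z : finType) (p : T * Z -> R) (z : Z) : R :=
  \sum_(t : T) p (t, z).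
Definition margY (X Y : finType) (p : X * Y -> R) (y : Y) : R :=
  \sum_(x : X) p (x, y).

Definition QW (X Y : finType) (Q : X -> R) (W : X -> Y -> R) (u : X * Y) : R :=
  Q u.1 * W u.1 u.2.
Definition QPY (X Y : finType) (Q : X -> R) (p : X * Y -> R) (u : X * Y) : R :=
  Q u.1 * margY p u.2.

Definition condH (T Z : finType) (p : T * Z -> R) : R :=
  - \sum_(u : T * Z | 0 < p u) p u * ln (p u / margZ p u.2).

Definition Ks (T Z : finType) (PU pU : T * Z -> R) : set (T * Z -> R) :=
  [set q | isdist q /\ (forall z, margZ q z = margZ pU z)
           /\ (Elog pU PU <= Elog q PU)%E].
Definition Kc (X Y : finType) (W : X -> Y -> R) (pXY : X * Y -> R)
  : set (X * Y -> R) :=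
  [set q | isdist q /\ (forall y, margY q y = margY pXY y)
           /\ (Elog pXY (fun u => W u.1 u.2) <= Elog q (fun u => W u.1 u.2))%E].

Definition posp (x : \bar R) : \bar R := Order.max x 0%E.

Definition E_exp (T Z X Y : finType) (PU : T * Z -> R) (Q : X -> R)
  (W : X -> Y -> R) : \bar R :=
  ereal_inf [set e | exists pU pXY, isdist pU /\ isdist pXY /\
    e = (relD pU PU + relD pXY (QW Q W) +
         posp (ereal_inf [set f | exists qU qXY,
                  Ks PU pU qU /\ Kc W pXY qXY /\
                  f = (relD qXY (QPY Q pXY) - (condH qU)%:E)%E]))%E].

Definition E_rhs (T Z X Y : finType) (PU : T * Z -> R) (Q : X -> R)
  (W : X -> Y -> R) : \bar R :=
  ereal_inf [set e | exists pU pXY, isdist pU /\ isdist pXY /\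
    e = (relD pU PU + relD pXY (QW Q W) +
         posp (relD pXY (QPY Q pXY) - (condH pU)%:E))%E].
End Defs.

(* Main.v *)
Require Import Defs.
From mathcomp Require Import all_boot all_order all_algebra.
From mathcomp Require Import all_classical all_reals.
From mathcomp Require Import ereal exp.
From mathcomp Require Import ring lra.
Import Order.TTheory GRing.Theory Num.Theory.
Local Open Scope ring_scope.
Set Implicit Arguments. Unset Strict Implicit.

Section H.
Variable R : realType.

Lemma relD_term (A : finType) (p q : A -> R) a : 0 < p a ->
  ((p a)%:E * ((ln (p a))%:E - elog (q a)) != -oo)%E.
Proof.
move=> pa; rewrite /elog; case: ifP => _; first by rewrite -EFinB -EFinM.
by rewrite /= addey // gt0_muley // lte_fin.
Qed.

Lemma sum_ninf (A : finType) (P : pred A) (F : A -> \bar R) :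
  (forall a, P a -> F a != -oo)%E -> (\sum_(a | P a) F a != -oo)%E.
Proof.
move=> H; apply: (big_ind (fun x => x != -oo)%E) => //.
by move=> [x| |] [y| |].
Qed.

Lemma relD_ninf (A : finType) (p q : A -> R) : (relD p q != -oo)%E.
Proof. by apply: sum_ninf => a; apply: relD_term. Qed.

Lemma relD_fin (A : finType) (p q : A -> R) :
  (forall a, 0 < p a -> 0 < q a) ->
  relD p q = (\sum_(a | 0 < p a) p a * (ln (p a) - ln (q a)))%:E.
Proof.
move=> H; rewrite /relD -sumEFin; apply: eq_bigr => a pa.
by rewrite /elog (H a pa) -EFinB -EFinM.
Qed.

Lemma relD_inf (A : finType) (p q : A -> R) :
  (exists a, 0 < p a /\ ~ 0 < q a) -> relD p q = +oo%E.
Proof.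
move=> [a [pa qa]]; rewrite /relD (bigD1 a) //= /elog.
have -> : (0 < q a) = false by apply/negP.
rewrite /= addey // gt0_muley ?lte_fin // addye //.
by apply: sum_ninf => b /andP [pb _]; apply: relD_term.
Qed.

Lemma Elog_fin (A : finType) (p f : A -> R) :
  (forall a, 0 < p a -> 0 < f a) ->
  Elog p f = (\sum_(a | 0 < p a) p a * ln (f a))%:E.
Proof.
move=> H; rewrite /Elog -sumEFin; apply: eq_bigr => a pa.
by rewrite /elog (H a pa) -EFinM.
Qed.

Lemma Elog_inf (A : finType) (p f : A -> R) :
  (exists a, 0 < p a /\ ~ 0 < f a) -> Elog p f = -oo%E.
Proof.
move=> [a [pa qa]]; rewrite /Elog (bigD1 a) //= /elog.
have -> : (0 < f a) = false by apply/negP.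
by rewrite gt0_muleNy ?lte_fin.
Qed.

Lemma sum_marg2 (A B : finType) (r : A * B -> R) (g : B -> R) :
  (forall u, 0 <= r u) ->
  \sum_(u | 0 < r u) r u * g u.2 = \sum_(b : B) (\sum_(a : A) r (a, b)) * g b.
Proof.
move=> r0; rewrite big_mkcond /=.
rewrite (eq_bigr (fun u => r (u.1, u.2) * g u.2)); last first.
  move=> [a b] _ /=; case: ifP => // h; move: (r0 (a, b)).
  by rewrite le_eqVlt h orbF => /eqP <-; rewrite mul0r.
rewrite -(pair_bigA _ (fun a b => r (a, b) * g b)) /= exchange_big /=.
by apply: eq_bigr => b _; rewrite big_distrl.
Qed.


Lemma posp_ge0 (x : \bar R) : (0 <= posp x)%E.
Proof. by rewrite /posp le_max lexx orbT. Qed.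

Lemma posp_ninf (x : \bar R) : (posp x != -oo)%E.
Proof.
apply/negP => /eqP h; have := posp_ge0 x; rewrite h leeNy_eq.
by [].
Qed.

Lemma posp_fin (r : R) : posp r%:E = (Num.max r 0)%:E.
Proof. by rewrite /posp EFin_max. Qed.

Lemma key (x c : \bar R) (S : set (\bar R)) : (c != -oo)%E ->
  (forall f, S f -> x <= c + posp f)%E -> (x <= c + posp (ereal_inf S))%E.
Proof.
case: c => [r| |] // _ H; last by rewrite addye ?posp_ninf // leey.
have [xr|xr] := leP x r%:E.
  by apply: le_trans xr _; rewrite leeDl // posp_ge0.
rewrite -leeBlDl //.
apply: (@le_trans _ _ (ereal_inf S)); last by rewrite /posp le_max lexx.
apply: le_ereal_inf_tmp => f Sf; have := H f Sf; rewrite -leeBlDl // /posp.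
case: (leP f 0) => hf //.
by rewrite leeBlDl // adde0 leNgt xr.
Qed.

Lemma dich (A : finType) (p q : A -> R) :
  (forall a, 0 < p a -> 0 < q a) \/ (exists a, 0 < p a /\ ~ 0 < q a).
Proof.
case: (boolP [forall a, (0 < p a) ==> (0 < q a)]) => [/forallP H|/forallPn [a]].
  by left=> a; move/implyP: (H a).
by rewrite negb_imply => /andP[pa /negP qa]; right; exists a.
Qed.

Lemma mul_pos_l (a b : R) : 0 <= a -> 0 < a * b -> 0 < a.
Proof.
move=> a0 ab; rewrite lt_def a0 andbT; apply/eqP => a0'.
by move: ab; rewrite a0' mul0r ltxx.
Qed.

Lemma mul_pos_r (a b : R) : 0 <= b -> 0 < a * b -> 0 < b.
Proof. by move=> b0; rewrite mulrC; apply: mul_pos_l. Qed.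

Lemma marg_ge (A B : finType) (r : A * B -> R) a b :
  (forall u, 0 <= r u) -> r (a, b) <= \sum_(a' : A) r (a', b).
Proof.
by move=> r0; rewrite (bigD1 a) //= lerDl sumr_ge0.
Qed.

Lemma IdU (T Z : finType) (p PU : T * Z -> R) :
  (forall u, 0 <= p u) -> (forall u, 0 < p u -> 0 < PU u) ->
  \sum_(u | 0 < p u) p u * (ln (p u) - ln (PU u)) + condH p =
  \sum_(z : Z) margZ p z * ln (margZ p z) - \sum_(u | 0 < p u) p u * ln (PU u).
Proof.
move=> p0 pP.
have HS : \sum_(z : Z) margZ p z * ln (margZ p z) =
   \sum_(u | 0 < p u) p u * ln (margZ p u.2).
  exact: (esym (@sum_marg2 T Z p (fun z => ln (margZ p z)) p0)).
rewrite HS /condH -!sumrB; apply: eq_bigr => [[t z]] pu /=.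
have mz : 0 < margZ p z by apply: lt_le_trans pu (@marg_ge T Z p t z p0).
rewrite ln_div ?posrE //; ring.
Qed.

Lemma IdY (X Y : finType) (r p : X * Y -> R) (Q : X -> R) (W : X -> Y -> R) :
  (forall u, 0 < r u -> 0 < Q u.1) -> (forall u, 0 < r u -> 0 < W u.1 u.2) ->
  (forall u, 0 < r u -> 0 < margY p u.2) ->
  \sum_(u | 0 < r u) r u * (ln (r u) - ln (QW Q W u)) =
  \sum_(u | 0 < r u) r u * (ln (r u) - ln (QPY Q p u)) +
  \sum_(u | 0 < r u) r u * ln (margY p u.2) -
  \sum_(u | 0 < r u) r u * ln (W u.1 u.2).
Proof.
move=> HQ HW HY; rewrite -big_split /= -sumrB; apply: eq_bigr => u ru.
rewrite /QW /QPY !lnM ?posrE ?HQ ?HW ?HY //; ring.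
Qed.


Lemma addninf (x y : \bar R) : (x != -oo)%E -> (y != -oo)%E -> (x + y != -oo)%E.
Proof. by case: x => [a| |]; case: y. Qed.

End H.
Unset Implicit Arguments.
Set Strict Implicit.

Theorem lemma4 (R : realType) (T Z X Y : finType)
  (PU : T * Z -> R) (Q : X -> R) (W : X -> Y -> R) :
  isdist PU -> isdist Q -> (forall x, isdist (W x)) ->
  (E_rhs PU Q W <= E_exp PU Q W)%E.
Proof.
move=> [PU0 PU1] [Q0 Q1] Wd.
have W0 : forall x y, 0 <= W x y by move=> x y; case: (Wd x) => h _; exact: h.
apply: le_ereal_inf_tmp => e [pU [pXY [[pU0 pU1] [[pXY0 pXY1] ->]]]].
apply: key; first by apply: addninf; apply: relD_ninf.
move=> f [qU [qXY [[[qU0 qU1] [mZ EU]] [[[qXY0 qXY1] [mY EW]] ->]]]].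
have V1 : (E_rhs PU Q W <= relD pU PU + relD pXY (QW Q W) +
    posp (relD pXY (QPY Q pXY) - (condH pU)%:E))%E.
  by apply: ereal_inf_lbound; exists pU, pXY; split; [split|split; [split|]].
have eQ : QPY Q qXY = QPY Q pXY by apply: boolp.funext => u; rewrite /QPY mY.
have V2 : (E_rhs PU Q W <= relD qU PU + relD qXY (QW Q W) +
    posp (relD qXY (QPY Q pXY) - (condH qU)%:E))%E.
  by apply: ereal_inf_lbound; exists qU, qXY; rewrite eQ; split; [split|split; [split|]].
have cninf : (relD pU PU + relD pXY (QW Q W) != -oo)%E by apply: addninf; apply: relD_ninf.
case: (dich pU PU) => [hA|hA]; last first.
  by rewrite (@relD_inf R _ pU PU hA) addye ?relD_ninf // addye ?posp_ninf // leey.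
case: (dich pXY (QW Q W)) => [hB|hB]; last first.
  by rewrite (@relD_inf R _ pXY _ hB) addey ?relD_ninf // addye ?posp_ninf // leey.
case: (dich qXY (QPY Q pXY)) => [ha|ha]; last first.
  by rewrite (@relD_inf R _ qXY _ ha) /= addye // /posp maxye addey // leey.
have hQp : forall u, 0 < pXY u -> 0 < Q u.1 by move=> u h; exact: mul_pos_l (Q0 _) (hB u h).
have hWp : forall u, 0 < pXY u -> 0 < W u.1 u.2 by move=> u h; exact: mul_pos_r (W0 _ _) (hB u h).
have hYp : forall u, 0 < pXY u -> 0 < margY pXY u.2.
  by move=> [x y] h; apply: lt_le_trans h (@marg_ge _ _ _ pXY x y pXY0).
have hb : forall u, 0 < pXY u -> 0 < QPY Q pXY u by move=> u h; rewrite /QPY mulr_gt0 ?hQp ?hYp.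
have hQq : forall u, 0 < qXY u -> 0 < Q u.1 by move=> u h; exact: mul_pos_l (Q0 _) (ha u h).
have hYq : forall u, 0 < qXY u -> 0 < margY pXY u.2.
  by move=> u h; apply: mul_pos_r (ha u h); rewrite /margY sumr_ge0.
rewrite (Elog_fin hA) in EU.
have hA' : forall u, 0 < qU u -> 0 < PU u.
  case: (dich qU PU) => // /Elog_inf h; by rewrite h leeNy_eq in EU.
rewrite (Elog_fin hWp) in EW.
have hWq : forall u, 0 < qXY u -> 0 < W u.1 u.2.
  case: (dich qXY (fun u => W u.1 u.2)) => // /Elog_inf h; by rewrite h leeNy_eq in EW.
rewrite (Elog_fin hWq) in EW.
rewrite (Elog_fin hA') in EU.
have hB' : forall u, 0 < qXY u -> 0 < QW Q W u by move=> u h; rewrite /QW mulr_gt0 ?hQq ?hWq.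
rewrite (relD_fin hA) (relD_fin hB) (relD_fin ha) in V1 V2 *.
rewrite (relD_fin hb) in V1.
rewrite (relD_fin hA') (relD_fin hB') in V2.
rewrite -!EFinB !posp_fin -!EFinD in V1 V2 *.
rewrite lee_fin in EU EW.
have IU1 := IdU pU0 hA.
have IU2 := IdU qU0 hA'.
have IY1 := IdY hQp hWp hYp.
have IY2 := IdY hQq hWq hYq.
have KZ : \sum_(z : Z) margZ qU z * ln (margZ qU z) = \sum_(z : Z) margZ pU z * ln (margZ pU z).
  by apply: eq_bigr => z _; rewrite mZ.
have KY : \sum_(u | 0 < qXY u) qXY u * ln (margY pXY u.2) =
          \sum_(u | 0 < pXY u) pXY u * ln (margY pXY u.2).
  rewrite (@sum_marg2 _ _ _ qXY (fun y => ln (margY pXY y)) qXY0).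
  rewrite (@sum_marg2 _ _ _ pXY (fun y => ln (margY pXY y)) pXY0).
  by apply: eq_bigr => y _; have := mY y; rewrite /margY => ->.
cbv beta in *.
move: EW; rewrite lee_fin => EW.
set b1 := (\sum_(a | 0 < pXY a) pXY a * (ln (pXY a) - ln (QPY Q pXY a))) in V1 IY1 *.
set a1 := (\sum_(a | 0 < qXY a) qXY a * (ln (qXY a) - ln (QPY Q pXY a))) in V2 IY2 *.
set h := condH pU in V1 IU1 *.
set h' := condH qU in V2 IU2 *.
case: (leP (b1 - h) (a1 - h')) => Hc.
  apply: le_trans V1 _; rewrite lee_fin lerD2l.
  by rewrite ge_max !le_max Hc lexx !orbT.
apply: le_trans V2 _; rewrite lee_fin lerD2r.
lra.
Qed.
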